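(* Let $S_1,\ldots,S_n$ be Polish spaces, $\mu$ a Borel probability measure on $S=\prod_iS_i$ and $\mathcal{I}$ a collection of subsets of $\{1,\ldots,n\}$. For every $f\in L^\infty(\mu)$ and every $d\ge1$ we have the pointwise estimate \[ \big|\mathfrak{h}\,|\mathfrak{h}^{(d)}f|\big|\le|\mathfrak{h}^{(d+1)}f| . \]
   Context: Notation: for $I\subset\{1,\ldots,n\}$ and $x\in S$, $\overline{x_I}=(x_i)_{i\notin I}$, and $(\overline{x_I},y_I)$ is the point with coordinates $y_i$ for $i\in I$, $x_i$ otherwise. $(m_{\overline{x_I}})$ is the disintegration of $\mu$ with respect to $\overline{x_I}$: probability measures on $\prod_{i\in I}S_i$ with $\int g\,d\mu=\int\int g(\overline{x_I},y_I)\,dm_{\overline{x_I}}(y_I)\,d\overline{\mu_I}(\overline{x_I})$, $\overline{\mu_I}$ the law of $\overline{x_I}$. For $I\in\mathcal{I}$ and a function $g$, $\mathfrak{h}_Ig(x)=\frac1{\sqrt2}\|g(\overline{x_I},y_I)-g(\overline{x_I},z_I)\|_{L^\infty(m_{\overline{x_I}}\otimes m_{\overline{x_I}}(y_I,z_I))}$, $|\mathfrak{h}g|=(\sum_{I\in\mathcal{I}}(\mathfrak{h}_Ig)^2)^{1/2}$; iteratively $\mathfrak{h}_{I_1\ldots I_d}g=\mathfrak{h}_{I_1}(\mathfrak{h}_{I_2\ldots I_d}g)$, and $|\mathfrak{h}^{(d)}g|=(\sum_{(I_1,\ldots,I_d)\in\mathcal{I}^d}(\mathfrak{h}_{I_1\ldots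 I_d}g)^2)^{1/2}$. *)

(* Defs.v *)
From HB Require Import structures.
From mathcomp Require Import all_boot all_order all_algebra.
From mathcomp Require Import all_classical all_reals all_analysis.
From mathcomp Require Import ess_sup_inf measurable_realfun lebesgue_measure lebesgue_integral kernel.
Set Implicit Arguments. Unset Strict Implicit. Unset Printing Implicit Defensive.
Import Order.TTheory GRing.Theory Num.Theory.
Import numFieldNormedType.Exports.
Local Open Scope classical_set_scope.
Local Open Scope ring_scope.

Definition polish (R : realType) (T : topologicalType) : Prop :=
  (exists D : set T, countable D /\ dense D) /\
  exists d : T -> T -> R,
    [/\ forall x y, d x y = 0 <-> x = y,
        forall x y, d x y = d y x,
        forall x y z, d x z <= d x y + d y z,
        forall A : set T, open A <->
          (forall x, A x -> exists2 e : R, 0 < e & [set y | d x y < e] `<=` A) &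
        forall u : nat -> T,
          (forall e : R, 0 < e -> exists N : nat, forall p q : nat,
              (N <= p)%N -> (N <= q)%N -> d (u p) (u q) < e) ->
          exists l : T, u @ \oo --> l].

Definition prodS (n : nat) (S : 'I_n -> ptopologicalType) := prod_topology S.
Definition borelS (n : nat) (S : 'I_n -> ptopologicalType) :=
  g_sigma_algebraType (@open (prodS S)).

Definition merge (n : nat) (S : 'I_n -> ptopologicalType) (I : {set 'I_n})
  (x y : borelS S) : borelS S :=
  (fun i => if i \in I then y i else x i) : prodS S.

Local Open Scope ereal_scope.

(* The conditional law m I x is a
   probability measure on S of which only the I-coordinates are used
   (i.e. its image on prod_{i in I} S_i is m_{xbar_I}); it depends on x only
   through xbar_I, is measurable in x, and satisfies the disintegration
   formula. *)
Definition is_disintegration (n : nat) (S : 'I_n -> ptopologicalType)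
  (R : realType) (mu : probability (borelS S) R) (I : {set 'I_n})
  (mI : borelS S -> probability (borelS S) R) : Prop :=
  [/\ (forall A : set (borelS S), measurable A ->
         measurable_fun setT (fun x => mI x A)),
      (forall x x' : borelS S, (forall i, i \notin I -> x i = x' i) ->
         mI x = mI x') &
      (forall g : borelS S -> \bar R, measurable_fun setT g ->
         (forall x, 0 <= g x) ->
         \int[mu]_x g x = \int[mu]_x (\int[mI x]_y g (merge I x y)))].

Definition hI (n : nat) (S : 'I_n -> ptopologicalType) (R : realType)
  (m : {set 'I_n} -> borelS S -> probability (borelS S) R)
  (I : {set 'I_n}) (g : borelS S -> \bar R) (x : borelS S) : \bar R :=
  ((Num.sqrt (2 : R))^-1)%:E *
  ess_sup (m I x \x m I x)
    (fun p => `| g (merge I x p.1) - g (merge I x p.2) |).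

Definition hiter (n : nat) (S : 'I_n -> ptopologicalType) (R : realType)
  (m : {set 'I_n} -> borelS S -> probability (borelS S) R)
  (s : seq {set 'I_n}) (g : borelS S -> \bar R) : borelS S -> \bar R :=
  foldr (fun I acc => hI m I acc) g s.

Definition hnorm (n : nat) (S : 'I_n -> ptopologicalType) (R : realType)
  (m : {set 'I_n} -> borelS S -> probability (borelS S) R)
  (Icol : {set {set 'I_n}}) (g : borelS S -> \bar R) (x : borelS S) : \bar R :=
  sqrte (\sum_(I in Icol) (hI m I g x) ^+ 2).

Definition hnormd (n : nat) (S : 'I_n -> ptopologicalType) (R : realType)
  (m : {set 'I_n} -> borelS S -> probability (borelS S) R)
  (Icol : {set {set 'I_n}}) (d : nat) (g : borelS S -> \bar R) (x : borelS S)
  : \bar R :=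
  sqrte (\sum_(s : d.-tuple {set 'I_n} | all (fun I => I \in Icol) s)
           (hiter m s g x) ^+ 2).

(* Main.v *)
Require Import Defs.
From HB Require Import structures.
From mathcomp Require Import all_boot all_order all_algebra.
From mathcomp Require Import all_classical all_reals all_analysis.
From mathcomp Require Import ess_sup_inf measurable_realfun lebesgue_measure lebesgue_integral kernel.
Import Order.TTheory GRing.Theory Num.Theory.
Import numFieldNormedType.Exports.
Local Open Scope classical_set_scope.
Local Open Scope ring_scope.
From mathcomp Require Import ring lra.


Lemma cs_sum (R : rcfType) (T : finType) (P : pred T) (v a : T -> R) :
  \sum_(i | P i) v i * a i <=
  Num.sqrt (\sum_(i | P i) v i ^+ 2) * Num.sqrt (\sum_(i | P i) a i ^+ 2).
Proof.
set A := Num.sqrt _; set B := Num.sqrt _.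
have hA : A ^+ 2 = \sum_(i|P i) v i ^+ 2.
  by rewrite sqr_sqrtr // sumr_ge0 // => i _; exact: sqr_ge0.
have hB : B ^+ 2 = \sum_(i|P i) a i ^+ 2.
  by rewrite sqr_sqrtr // sumr_ge0 // => i _; exact: sqr_ge0.
have A0 : 0 <= A := sqrtr_ge0 _.
have B0 : 0 <= B := sqrtr_ge0 _.
have key : 0 <= \sum_(i|P i) (B * v i - A * a i) ^+ 2.
  by rewrite sumr_ge0 // => i _; exact: sqr_ge0.
rewrite (eq_bigr (fun i => B^+2 * v i ^+2 - (2*A*B) * (v i * a i) + A^+2 * a i ^+2)) in key; last first.
  by move=> i _; ring.
rewrite big_split /= sumrB -!mulr_sumr -hA -hB in key.
set Sm := \sum_(i | P i) v i * a i in key *.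
have [AB0|ABgt0] := eqVneq (A * B) 0.
  move/eqP: AB0; rewrite mulf_eq0 => /orP[/eqP A0'|/eqP B0'].
  - have : \sum_(i|P i) v i ^+ 2 = 0 by rewrite -hA A0' expr0n.
    move/psumr_eq0P => H.
    rewrite /Sm big1 ?A0' ?mul0r // => i Pi.
    have /eqP := H (fun j _ => sqr_ge0 _) i Pi. by rewrite sqrf_eq0 => /eqP ->; rewrite mul0r.
    - have : \sum_(i|P i) a i ^+ 2 = 0 by rewrite -hB B0' expr0n.
    move/psumr_eq0P => H.
    rewrite /Sm big1 ?B0' ?mulr0 // => i Pi.
    have /eqP := H (fun j _ => sqr_ge0 _) i Pi. by rewrite sqrf_eq0 => /eqP ->; rewrite mulr0.
have ABp : 0 < A * B by rewrite lt_def ABgt0 mulr_ge0.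
nra.
Qed.

Lemma tri_half (R : rcfType) (T : finType) (P : pred T) (u v a : T -> R) :
  (forall i, P i -> 0 <= u i) -> (forall i, P i -> 0 <= v i) ->
  (forall i, P i -> u i <= v i + a i) -> (forall i, P i -> 0 <= a i) ->
  Num.sqrt (\sum_(i | P i) u i ^+ 2) <=
  Num.sqrt (\sum_(i | P i) v i ^+ 2) + Num.sqrt (\sum_(i | P i) a i ^+ 2).
Proof.
move=> u0 v0 uva a0.
set V := Num.sqrt (\sum_(i | P i) v i ^+ 2); set B := Num.sqrt (\sum_(i | P i) a i ^+ 2).
have hV : V ^+ 2 = \sum_(i|P i) v i ^+ 2.
  by rewrite sqr_sqrtr // sumr_ge0 // => i _; exact: sqr_ge0.
have hB : B ^+ 2 = \sum_(i|P i) a i ^+ 2.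
  by rewrite sqr_sqrtr // sumr_ge0 // => i _; exact: sqr_ge0.
have V0 : 0 <= V := sqrtr_ge0 _.
have B0 : 0 <= B := sqrtr_ge0 _.
have -> : V + B = Num.sqrt ((V + B) ^+ 2) by rewrite sqrtr_sqr ger0_norm // addr_ge0.
rewrite ler_sqrt; last exact: sqr_ge0.
apply: (@le_trans _ _ (\sum_(i | P i) (v i ^+ 2 + 2 * (v i * a i) + a i ^+ 2))).
  apply: ler_sum => i Pi; have := u0 i Pi; have := v0 i Pi; have := a0 i Pi; have := uva i Pi.
  move=> h1 h2 h3 h4; nra.
rewrite !big_split /= -mulr_sumr -hV -hB.
have := @cs_sum _ _ P v a; rewrite -/V -/B => cs.
nra.
Qed.

Lemma tri_abs (R : rcfType) (T : finType) (P : pred T) (u v a : T -> R) :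
  (forall i, P i -> 0 <= u i) -> (forall i, P i -> 0 <= v i) ->
  (forall i, P i -> `|u i - v i| <= a i) ->
  `|Num.sqrt (\sum_(i | P i) u i ^+ 2) - Num.sqrt (\sum_(i | P i) v i ^+ 2)|
    <= Num.sqrt (\sum_(i | P i) a i ^+ 2).
Proof.
move=> u0 v0 h.
have a0 : forall i, P i -> 0 <= a i by move=> i Pi; exact: le_trans (h i Pi).
rewrite ler_norml; apply/andP; split.
  rewrite lerBrDr addrC -lerBrDr opprK addrC.
  apply: tri_half => // i Pi; have := h i Pi; rewrite ler_norml => /andP[h1 h2]; lra.
rewrite lerBlDr addrC.
apply: tri_half => // i Pi; have := h i Pi; rewrite ler_norml => /andP[h1 h2]; lra.
Qed.

Local Open Scope ereal_scope.
Lemma tri_abse (R : realType) (T : finType) (P : pred T) (u v a : T -> \bar R) :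
  (forall i, 0 <= u i)%E -> (forall i, 0 <= v i)%E ->
  (forall i, P i -> `|u i - v i| <= a i)%E ->
  (`|sqrte (\sum_(i | P i) u i ^+ 2) - sqrte (\sum_(i | P i) v i ^+ 2)|
    <= sqrte (\sum_(i | P i) a i ^+ 2))%E.
Proof.
move=> u0 v0 h.
have a0 : forall i, P i -> 0 <= a i by move=> i Pi; exact: le_trans (abse_ge0 _) (h i Pi).
have [fa|nfa] := boolP [forall i, P i ==> (a i \is a fin_num)]; last first.
  move/forallPn: nfa => [i]; rewrite negb_imply => /andP[Pi ai].
  have aiy : a i = +oo.
    by move: ai (a0 i Pi); case: (a i).
  have -> : \sum_(j | P j) a j ^+ 2 = +oo.
    rewrite (bigD1 i) //= aiy mulyy addye //.
    set s := (X in X != -oo).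
    have : 0 <= s by apply: sume_ge0 => j _; rewrite -expe2 sqre_ge0.
    by case: s.
  by rewrite /= leey.
have fa' : forall i, P i -> a i \is a fin_num by move=> i Pi; move/forallP: fa => /(_ i); rewrite Pi.
have fu : forall i, P i -> u i \is a fin_num.
  move=> i Pi; move: (h i Pi) (fa' i Pi) (u0 i) (v0 i).
  by case: (u i) (v i) (a i) => [x||] [y||] [z||].
have fv : forall i, P i -> v i \is a fin_num.
  move=> i Pi; move: (h i Pi) (fa' i Pi) (u0 i) (v0 i).
  by case: (u i) (v i) (a i) => [x||] [y||] [z||].
have E : forall w : T -> \bar R, (forall i, P i -> w i \is a fin_num) ->
    \sum_(i | P i) w i ^+ 2 = (\sum_(i | P i) (fine (w i)) ^+ 2)%:E.
  move=> w fw; rewrite -sumEFin; apply: eq_bigr => i Pi.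
  by rewrite EFin_expe fineK // fw.
rewrite (E u fu) (E v fv) (E a fa') /= lee_fin.
apply: tri_abs.
- by move=> i Pi; rewrite fine_ge0.
- by move=> i Pi; rewrite fine_ge0.
- move=> i Pi; have := h i Pi.
  by rewrite -(fineK (fu i Pi)) -(fineK (fv i Pi)) -(fineK (fa' i Pi)) /= lee_fin.
Qed.

Local Open Scope ereal_scope.

Lemma nu_pos (n : nat) (S : 'I_n -> ptopologicalType) (R : realType)
  (m : {set 'I_n} -> borelS S -> probability (borelS S) R) I x :
  0 < (m I x \x m I x) [set: borelS S * borelS S].
Proof.
rewrite -setXTT product_measure1E //.
have E : forall y : \bar R, y = 1 -> 0 < y * y by move=> y ->; rewrite mule1 lte01.
apply: E; exact: probability_setT. Qed.

Lemma hI_ge0 (n : nat) (S : 'I_n -> ptopologicalType) (R : realType)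
  (m : {set 'I_n} -> borelS S -> probability (borelS S) R) I g x :
  0 <= hI m I g x.
Proof.
rewrite /hI; apply: mule_ge0; first by rewrite lee_fin invr_ge0 sqrtr_ge0.
apply: ess_sup_gee; first exact: nu_pos.
by apply: nearW => p; exact: abse_ge0.
Qed.

Lemma ess_key (n : nat) (S : 'I_n -> ptopologicalType) (R : realType)
  (m : {set 'I_n} -> borelS S -> probability (borelS S) R) I x
  (T : finType) (P : pred T) (g : T -> borelS S -> \bar R) :
  (forall s y, 0 <= g s y) ->
  ess_sup (m I x \x m I x)
    (fun p => `| sqrte (\sum_(s | P s) g s (Defs.merge I x p.1) ^+ 2)
               - sqrte (\sum_(s | P s) g s (Defs.merge I x p.2) ^+ 2) |)
  <= sqrte (\sum_(s | P s) (ess_sup (m I x \x m I x)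
       (fun p => `| g s (Defs.merge I x p.1) - g s (Defs.merge I x p.2) |)) ^+ 2).
Proof.
move=> g0; apply/ess_supP.
have Hall := filter_forall (ae_filter_ringOfSetsType (m I x \x m I x))
  (fun s => ess_sup_ge (m I x \x m I x)
     (fun p => `| g s (Defs.merge I x p.1) - g s (Defs.merge I x p.2) |)).
apply: filterS Hall => p Hp.
pose a := fun s => ess_sup (m I x \x m I x)
       (fun p => `| g s (Defs.merge I x p.1) - g s (Defs.merge I x p.2) |).
have := (@tri_abse R T P (fun s => g s (Defs.merge I x p.1)) (fun s => g s (Defs.merge I x p.2)) a (fun s => g0 _ _) (fun s => g0 _ _)).
have Hp' : forall s, P s -> `|g s (Defs.merge I x p.1) - g s (Defs.merge I x p.2)| <= a s.
  move=> s _. exact: Hp.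
move=> /(_ Hp'). exact.
Qed.

Lemma sqrMc (R : realType) (c : R) (y : \bar R) : (0 < c)%R ->
  (c%:E * y) ^+ 2 = (c ^+ 2)%:E * y ^+ 2.
Proof. by move=> c0; rewrite !expe2 muleACA -EFinM expr2. Qed.

Lemma hI_sq (n : nat) (S : 'I_n -> ptopologicalType) (R : realType)
  (m : {set 'I_n} -> borelS S -> probability (borelS S) R) I x
  (T : finType) (P : pred T) (g : T -> borelS S -> \bar R) :
  (forall s y, 0 <= g s y) ->
  hI m I (fun y => sqrte (\sum_(s | P s) g s y ^+ 2)) x ^+ 2
  <= \sum_(s | P s) hI m I (g s) x ^+ 2.
Proof.
move=> g0.
have c0 : (0 < (Num.sqrt (2 : R))^-1)%R by rewrite invr_gt0 sqrtr_gt0.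
rewrite /hI sqrMc //.
under eq_bigr => s _ do rewrite sqrMc //.
rewrite -ge0_sume_distrr; last by move=> s _; exact: sqre_ge0.
rewrite lee_pmul2l ?lte_fin ?exprn_gt0 //.
set B := \sum_(s | P s) _.
have B0 : 0 <= B by apply: sume_ge0 => s _; exact: sqre_ge0.
rewrite -(sqr_sqrte B0) lee_sqr ?sqrte_ge0 //; last first.
  apply: ess_sup_gee; first exact: nu_pos.
  by apply: nearW => p; exact: abse_ge0.
exact: (@ess_key n S R m I x T P g g0).
Qed.

Lemma sum_cons (R : realType) (X : finType) (Q : pred X) (d : nat)
  (H : X -> d.-tuple X -> \bar R) (K : d.+1.-tuple X -> \bar R) :
  (forall I s, K (cons_tuple I s) = H I s) ->
  \sum_(t : d.+1.-tuple X | all Q t) K t =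
  \sum_(I | Q I) \sum_(s : d.-tuple X | all Q s) H I s.
Proof.
move=> HK; rewrite pair_big_dep /=.
rewrite (reindex (fun p : X * d.-tuple X => (cons_tuple p.1 p.2))) /=; last first.
  exists (fun t => (thead t, behead_tuple t)) => [[I s] _ | t _].
    by rewrite theadE; congr pair; apply: val_inj.
  by apply: val_inj => /=; case: t => [[|a l] //=].
by apply: eq_bigr => p _; rewrite HK.
Qed.

Lemma hiter_ge0 (n : nat) (S : 'I_n -> ptopologicalType) (R : realType)
  (m : {set 'I_n} -> borelS S -> probability (borelS S) R) (d : nat)
  (s : d.+1.-tuple {set 'I_n}) g y : 0 <= hiter m s g y.
Proof.
case: s => [[|I0 s'] //= _].
exact: hI_ge0.
Qed.

Local Close Scope ereal_scope.

Theorem lemma2p3 (R : realType) (n : nat) (S : 'I_n -> ptopologicalType)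
  (HS : forall i, polish R (S i))
  (mu : probability (borelS S) R)
  (Icol : {set {set 'I_n}})
  (m : {set 'I_n} -> borelS S -> probability (borelS S) R)
  (Hm : forall I, I \in Icol -> is_disintegration mu I (m I))
  (f : borelS S -> R)
  (Hfm : measurable_fun setT f)
  (Hfb : (ess_sup mu (fun x => (`| f x |)%:E) < +oo)%E)
  (d : nat) (Hd : (1 <= d)%N) :
  forall x : borelS S,
    (hnorm m Icol (hnormd m Icol d (fun y => (f y)%:E)) x
     <= hnormd m Icol d.+1 (fun y => (f y)%:E) x)%E.
Proof.
Local Open Scope ereal_scope.
move=> x.
case: d Hd => [//|d'] _.
rewrite /hnorm [X in _ <= X]/hnormd lee_sqrt; last first.
  by apply: sume_ge0 => t _; exact: sqre_ge0.
rewrite (@sum_cons R _ (fun I => I \in Icol) d'.+1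
  (fun I s => hI m I (hiter m s (fun y => (f y)%:E)) x ^+ 2)
  (fun t => hiter m t (fun y => (f y)%:E) x ^+ 2)) //.
apply: lee_sum => I _.
have H := (@hI_sq n S R m I x (d'.+1.-tuple {set 'I_n})
  (fun s => all (fun I => I \in Icol) s) (fun s => hiter m s (fun y => (f y)%:E))
  (fun s y => @hiter_ge0 n S R m d' s _ y)).
rewrite /hnormd. exact: H.
Qed.
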